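(* Assume $\operatorname{non}(\mathcal N)=\mathfrak c$. Then $\mathcal{ND}_{\mathfrak c}$ is strongly $\mathfrak c$-algebrable in $\left(\mathbb R^{[0,1]}\right)^{\mathfrak c}$.
   Context: For a regular infinite cardinal $\kappa$, a $\kappa$-sequence $(x_\alpha)_{\alpha<\kappa}$ converges to $x$ if for every neighbourhood $U$ of $x$ there is $\alpha_0<\kappa$ with $x_\alpha\in U$ for all $\alpha_0<\alpha<\kappa$; $\left(\mathbb R^{[0,1]}\right)^{\kappa}$ is the commutative real algebra of $\kappa$-sequences of functions $[0,1]\to\mathbb R$ with indexwise operations. $\lambda$ is Lebesgue measure, $\mathcal N$ the null subsets of $[0,1]$, $\operatorname{non}(\mathcal N)$ the least cardinality of a non-null subset of $[0,1]$. $\mathcal{ND}_{\kappa}$: $\kappa$-sequences of Lebesgue measurable $f_\alpha:[0,1]\to\mathbb R$ such that there is an integrable $g$ with $|f_\alpha|\le g$ a.e. for all $\alpha$, $f_\alpha\to f$ a.e. for some integrable $f$, and $\int|f_\alpha-f|\,d\lambda\not\to0$. $S$ is strongly $\mu$-algebrable if there is a set $X$ of $\mu$ algebraically independent elements such that every nonzero element of the (non-unital) algebra generated by $X$ belongs to $S$. *)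

(* Defs.v *)
From HB Require Import structures.
From mathcomp Require Import all_boot all_order all_algebra.
From mathcomp Require Import all_classical all_reals all_analysis.
From mathcomp Require mpoly.

Set Implicit Arguments.
Unset Strict Implicit.
Unset Printing Implicit Defensive.

Import Order.TTheory GRing.Theory Num.Theory.
Import numFieldTopology.Exports numFieldNormedType.Exports.
Local Open Scope classical_set_scope.
Local Open Scope ring_scope.

Definition unit_itv (R : realType) := {x : R | (0 <= x <= 1)%R}.

Definition ext01 (R : realType) (f : unit_itv R -> R) : R -> R :=
  fun x => match pselect (is_true (0 <= x <= 1)%R) with
           | left h => f (exist _ x h)
           | right _ => 0
           end.

Notation leb R := (@completed_lebesgue_measure R).
(* Its measurable space: R with the Lebesgue-measurable sets. *)
Definition lebT (R : realType) : measurableType _ :=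
  ltac:(let t := type of (@completed_lebesgue_measure R) in
        match t with set ?T -> _ => exact T end).

(* (I, lt) is a well-ordered index set of order type the initial ordinal of
   the continuum c = |R|: a strict well-order, |I| = |R|, and every proper
   initial segment has cardinality < |R|. *)
Definition continuum_index (R : realType) (I : Type) (lt : I -> I -> Prop) : Prop :=
  [/\ (forall a, ~ lt a a) /\
      (forall a b c, lt a b -> lt b c -> lt a c),
      (forall a b, lt a b \/ a = b \/ lt b a),
      well_founded lt,
      ([set: I] #= [set: R])%card &
      (forall a, ~ ([set: R] #<= [set b | lt b a])%card)].

Definition kconv (I : Type) (lt : I -> I -> Prop) (T : topologicalType)
  (s : I -> T) (x : T) : Prop :=
  forall U, nbhs x U -> exists a0, forall a, lt a0 a -> U (s a).

(* non(N) = c: every subset of [0,1] of cardinality < c is Lebesgue null. *)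
Definition nonN_eq_c (R : realType) : Prop :=
  forall A : set R, A `<=` `[0, 1]%classic ->
    ~ ([set: R] #<= A)%card -> (@lebesgue_measure R).-negligible A.

Definition ND (R : realType) (I : Type) (lt : I -> I -> Prop)
  (f : I -> unit_itv R -> R) : Prop :=
  [/\ (forall a, measurable_fun (`[0, 1]%classic : set (lebT R))
                                (ext01 (f a) : lebT R -> R)),
      (exists g : unit_itv R -> R,
          (leb R).-integrable `[0, 1]%classic (EFin \o ext01 g) /\
          forall a, {ae leb R, forall x, `[0, 1]%classic x ->
                                 `|ext01 (f a) x| <= ext01 g x}) &
      (exists F : unit_itv R -> R,
          [/\ (leb R).-integrable `[0, 1]%classic (EFin \o ext01 F),
              {ae leb R, forall x, `[0, 1]%classic x ->
                   @kconv I lt R (fun a => ext01 (f a) x) (ext01 F x)} &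
              ~ @kconv I lt (\bar R) (fun a => (\int[leb R]_(x in `[0%R, 1%R]%classic)
                                      `|ext01 (f a) x - ext01 F x|%:E)%E)
                         (0%E : \bar R)])].

Definition peval (R : realType) (I J : Type) (x : J -> I -> unit_itv R -> R)
  (n : nat) (t : 'I_n -> J) (P : mpoly.mpoly n R) : I -> unit_itv R -> R :=
  fun a u => mpoly.meval (fun i => x (t i) a u) P.

(* S is strongly c-algebrable in (R^[0,1])^I: there is a family of c = |R|
   distinct, algebraically independent elements such that every nonzero
   element of the (non-unital) algebra they generate lies in S. *)
Definition strongly_c_algebrable (R : realType) (I : Type)
  (S : (I -> unit_itv R -> R) -> Prop) : Prop :=
  exists (J : Type) (x : J -> I -> unit_itv R -> R),
    [/\ ([set: J] #= [set: R])%card,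
        injective x,
        (forall (n : nat) (t : 'I_n -> J) (P : mpoly.mpoly n R),
            injective t -> (exists m, mpoly.mcoeff m P <> 0) -> peval x t P <> (fun _ _ => 0)) &
        (forall (n : nat) (t : 'I_n -> J) (P : mpoly.mpoly n R),
            injective t -> mpoly.mcoeff mpoly.mnm0 P = 0 ->
            peval x t P <> (fun _ _ => 0) -> S (peval x t P))].

(* Main.v *)
Require Import Defs.
From HB Require Import structures.
From mathcomp Require Import all_boot all_order all_algebra.
From mathcomp Require Import mpoly.
From mathcomp Require Import all_classical all_reals all_analysis.
From mathcomp Require Import lra zify.
Import Order.TTheory GRing.Theory Num.Theory.
Import numFieldTopology.Exports numFieldNormedType.Exports.
Local Open Scope classical_set_scope.
Local Open Scope ring_scope.

Lemma kron_inj {D n : nat} (a b : 'I_n -> nat) :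
  (forall i, (a i < D)%N) -> (forall i, (b i < D)%N) ->
  (\sum_(i < n) a i * D ^ i = \sum_(i < n) b i * D ^ i)%N -> forall i, a i = b i.
Proof.
elim: n a b => [|n IH] a b ha hb; first by move=> _ [].
rewrite !big_ord_recl /= !expn0 !muln1.
have Hs (c : 'I_n.+1 -> nat) : (\sum_(i < n) c (lift ord0 i) * D ^ (bump 0 i) =
   D * \sum_(i < n) c (lift ord0 i) * D ^ i)%N.
  by rewrite big_distrr /=; apply: eq_bigr => i _; rewrite /bump /= add1n expnS mulnCA.
rewrite !Hs => E.
have E0 : a ord0 = b ord0.
  have := congr1 (fun x => x %% D)%N E.
  by rewrite /= !(addnC (_ ord0)) !(mulnC D) !modnMDl !modn_small.
have Dp : (0 < D)%N by have := ha ord0; lia.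
have E1 : (\sum_(i < n) a (lift ord0 i) * D ^ i = \sum_(i < n) b (lift ord0 i) * D ^ i)%N.
  by move: E; rewrite E0 => /addnI /eqP; rewrite eqn_pmul2l // => /eqP.
have IH' := IH (fun i => a (lift ord0 i)) (fun i => b (lift ord0 i)) (fun i => ha _) (fun i => hb _) E1.
by move=> i; case: (unliftP ord0 i) => [j ->|->].
Qed.

Lemma mnm_le_deg {n} (m : mpoly.multinom n) i : (m i <= mpoly.mdeg m)%N.
Proof. by rewrite mpoly.mdegE (bigD1 i) //= leq_addr. Qed.

Lemma kronecker (R : realType) n (P : mpoly.mpoly n R) : P != 0 ->
  exists k : nat, mpoly.meval (fun i : 'I_n => (k.+2%:R^-1 : R) ^+ (mpoly.msize P ^ i)%N) P != 0.
Proof.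
move=> P0.
set D := mpoly.msize P.
pose kap (m : mpoly.multinom n) := (\sum_(i < n) m i * D ^ i)%N.
pose q : {poly R} := \sum_(m <- mpoly.msupp P) mpoly.mcoeff m P *: 'X^(kap m).
have Heval y : mpoly.meval (fun i : 'I_n => y ^+ (D ^ i)%N) P = q.[y].
  rewrite mpoly.mevalE horner_sum; apply: eq_bigr => m _.
  rewrite hornerZ hornerXn; congr (_ * _).
  rewrite /kap -prodrXr; apply: eq_bigr => i _.
  by rewrite -exprM mulnC.
have Hlt m i : m \in mpoly.msupp P -> (m i < D)%N.
  move=> mP; have h1 := mnm_le_deg m i; have h2 := mpoly.msize_mdeg_lt mP.
  exact: (leq_ltn_trans h1 h2).
have q0 : q != 0.
  have [m0 m0P] : exists m0, m0 \in mpoly.msupp P.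
    case E: (mpoly.msupp P) => [|m0 s]; last by exists m0; rewrite mem_head.
    by move/eqP: E; rewrite mpoly.msupp_eq0 (negbTE P0).
  apply/eqP => /(congr1 (fun p : {poly R} => p`_(kap m0))).
  rewrite coef0 coef_sum (bigD1_seq m0) ?mpoly.msupp_uniq //= coefZ coefXn eqxx mulr1.
  rewrite big1_seq ?addr0.
    by move=> /eqP; rewrite -[_ == 0]negbK -mpoly.mcoeff_msupp m0P.
  move=> m /andP[mm0 mP]; rewrite coefZ coefXn.
  case: eqP => [E'|]; last by rewrite mulr0.
  exfalso; move/negP: mm0; apply; apply/eqP/mpoly.mnmP => i.
  exact: (esym (kron_inj _ _ (fun i => Hlt _ i m0P) (fun i => Hlt _ i mP) E' i)).

apply: contrapT => /forallNP Hall.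
have := @max_poly_roots _ q (mkseq (fun k : nat => (k.+2%:R^-1 : R)) (size q)) q0.
rewrite size_mkseq ltnn => H; suff : false by []; apply: H.
- apply/allP => y /mapP[k _ ->]; apply/rootP.
  rewrite -Heval; have := Hall k; by move/negP/negPn/eqP.
- apply: mkseq_uniq => k k' /invr_inj /eqP; rewrite eqr_nat => /eqP; by case.
Qed.

Lemma prod_zero_pow (R : realType) n (m : 'X_{1..n}) :
  \prod_(i < n) (0 : R) ^+ (m i) = (m == 0%MM)%:R.
Proof.
case: (m =P 0%MM) => [->|/eqP mn0].
  by rewrite big1 // => i _; rewrite mnm0E expr0.
have [i mi] : exists i, m i != 0%N.
  apply: contrapT => /forallNP H; move/eqP: mn0; apply; apply/mnmP => i.
  by rewrite mnm0E; move: (H i) => /negP; rewrite negbK => /eqP.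
by rewrite (bigD1 i) //= expr0n (negbTE mi) mul0r.
Qed.

Lemma meval_zero (R : realType) n (P : {mpoly R[n]}) :
  P.@[fun _ => 0] = P@_0%MM.
Proof.
rewrite mevalE.
under eq_bigr do rewrite prod_zero_pow.
case: (boolP (0%MM \in msupp P)) => H.
  rewrite (bigD1_seq 0%MM) ?msupp_uniq //= eqxx mulr1 big1 ?addr0 //.
  by move=> m /negbTE ->; rewrite mulr0.
rewrite big1_seq ?memN_msupp_eq0 //.
move=> m /andP[_ mP]; case: (m =P 0%MM) => [E|_]; last by rewrite mulr0.
by move: H; rewrite -E mP.
Qed.

Lemma meval_bound (R : realType) n (P : {mpoly R[n]}) (v : 'I_n -> R) :
  (forall i, `|v i| <= 1) -> `|P.@[v]| <= \sum_(m <- msupp P) `|P@_m|.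
Proof.
move=> hv; rewrite mevalE; apply: le_trans (ler_norm_sum _ _ _) _.
apply: ler_sum => m _; rewrite normrM ler_piMr // normr_prod.
have : 0 <= \prod_i `|v i ^+ m i| <= 1.
  apply: (big_ind (fun x : R => 0 <= x <= 1)).
  - by rewrite ler01 lexx.
  - move=> x y /andP[x0 x1] /andP[y0 y1]; rewrite mulr_ge0 //= mulr_ile1 //.
  - by move=> i _; rewrite normr_ge0 normrX exprn_ile1.
by case/andP.
Qed.

Definition entry := (rat * rat * nat * nat)%type.
Definition valk (R : realType) (k e : nat) : R := (k.+2%:R^-1) ^+ e.
Fixpoint lookup {R : realType} (w : seq entry) (j : R) : R :=
  match w with
  | [::] => 0
  | (a, b, k, e) :: w' => if (ratr a < j) && (j < ratr b) then valk R k e else lookup w' j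
  end.
Definition code {R : realType} (z : R) : seq entry := odflt [::] (unpickle (Num.truncn z)).
Definition Cf {R : realType} (j z : R) : R := lookup (code z) j.

Lemma valk_01 (R : realType) k e : 0 <= valk R k e <= 1.
Proof.
have h0 : 0 <= (k.+2%:R : R)^-1 by rewrite invr_ge0.
have h1 : (k.+2%:R : R)^-1 <= 1 by rewrite invf_le1 ?ler1n //.
by rewrite /valk exprn_ge0 //= exprn_ile1.
Qed.

Lemma lookup_01 (R : realType) w (j : R) : 0 <= lookup w j <= 1.
Proof.
elim: w => [|[[[a b] k] e] w IH] /=; first by rewrite lexx ler01.
by case: ifP => _ //; exact: valk_01.
Qed.

Lemma Cf_norm (R : realType) (j z : R) : `|Cf j z| <= 1.
Proof. by have /andP[h0 h1] := lookup_01 R (code z) j; rewrite ger0_norm. Qed.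

Lemma Cf_code (R : realType) (j z : R) w : Num.truncn z = pickle w -> Cf j z = lookup w j.
Proof. by rewrite /Cf /code => ->; rewrite pickleK. Qed.

Lemma separate {R : realType} {n} (t : 'I_n -> R) : injective t ->
  forall i, exists ab : rat * rat, (ratr ab.1 < t i < ratr ab.2) /\
    forall i', i' != i -> ~~ ((ratr ab.1 < t i') && (t i' < ratr ab.2)).
Proof.
move=> tinj i.
pose d := \big[Order.min/1]_(i' | i' != i) `|t i' - t i|.
have d0 : 0 < d.
  apply/bigmin_gtP; split => // i' ii'; rewrite normr_gt0 subr_eq0.
  by apply/eqP => /tinj /eqP; rewrite (negbTE ii').
have dle i' : i' != i -> d <= `|t i' - t i|.
  by move=> ii'; rewrite /d (bigD1 i') //= ge_min lexx.
have [a /andP [a1 a2]] : exists a : rat, ratr a \in `]t i - d, t i[.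
  by apply: rat_in_itvoo; lra.
have [b /andP [b1 b2]] : exists b : rat, ratr b \in `]t i, t i + d[.
  by apply: rat_in_itvoo; lra.
move: a1 a2 b1 b2; rewrite !bnd_simp => a1 a2 b1 b2.
exists (a, b); split; first by rewrite /= a2 b1.
move=> i' ii' /=; apply/negP => /andP[h1 h2].
have := dle _ ii'; rewrite leNgt => /negP; apply.
rewrite ltr_distl; apply/andP; split; lra.
Qed.

Lemma lookup_map (R : realType) n (t : 'I_n -> R) (F : 'I_n -> entry) (s : seq 'I_n) i :
  (forall i', (ratr (F i').1.1.1 < t i) && (t i < ratr (F i').1.1.2) = (i' == i)) ->
  i \in s -> lookup (map F s) (t i) = valk R (F i).1.2 (F i).2.
Proof.
move=> hF; elim: s => [//|i0 s IH] /=; rewrite in_cons.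
case E: (F i0) => [[[a b] k] e]; have := hF i0; rewrite E /= => ->.
case: (eqVneq i0 i) => [<- _|ne H]; first by rewrite E.
apply: IH; case/orP: H => // /eqP E'; by rewrite E' eqxx in ne.
Qed.

Lemma realize (R : realType) n (t : 'I_n -> R) (k : nat) (e : 'I_n -> nat) :
  injective t -> exists w : seq entry, forall i, lookup w (t i) = valk R k (e i).
Proof.
move=> tinj; have [ab hab] := fin_all_exists (separate _ tinj).
exists (map (fun i => ((ab i).1, (ab i).2, k, e i)) (enum 'I_n)) => i.
rewrite (@lookup_map R n t _ _ i) ?mem_enum // => i' /=.
have [-> | ii'] := eqVneq i' i; first exact: (hab i).1.
by apply/negbTE/(hab i').2; rewrite eq_sym.
Qed.

Lemma lebT_borel (R : realType) (B : set R) :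
  measurable (B : set (measurableTypeR R)) -> measurable (B : set (lebT R)).
Proof. exact: sub_caratheodory. Qed.

Lemma lebT_negl (R : realType) (N : set R) :
  (@lebesgue_measure R).-negligible N ->
  measurable (N : set (lebT R)) /\ leb R N = 0%E.
Proof.
move=> hN; split; last by apply/negligible_outer_measure.
apply: negligible_sub_caratheodory.
case: hN => B [mB B0 NB]; exists B; split => //; exact: sub_caratheodory.
Qed.

Lemma leb01 (R : realType) : leb R `[0, 1]%classic = 1%E.
Proof. rewrite (_ : leb R _ = lebesgue_measure `[0%R, 1%R]%classic) //. by rewrite lebesgue_measure_itv /= lte_fin ltr01 sube0. Qed.

Section Main.
Variable R : realType.
Variable I : Type.
Variable lt : I -> I -> Prop.
Hypothesis ltirr : forall a, ~ lt a a.
Hypothesis lttri : forall a b, lt a b \/ a = b \/ lt b a.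
Hypothesis segsmall : forall a, ~ ([set: R] #<= [set b | lt b a])%card.
Variable th : I -> R.
Variable thi : R -> I.
Hypothesis thK : cancel th thi.
Hypothesis thiK : cancel thi th.
Hypothesis nonN : nonN_eq_c R.

Definition A a : set R := th @` [set b | lt b a].

Lemma small_negl (S : set R) a : S `<=` `[0, 1]%classic ->
  (S #<= A a)%card -> (@lebesgue_measure R).-negligible S.
Proof.
move=> S01 SA; apply: nonN => // H; apply: (segsmall a).
exact: card_le_trans (card_le_trans H SA) (card_image_le _ _).
Qed.

Lemma A_negl a : (@lebesgue_measure R).-negligible (A a `&` `[0, 1]%classic).
Proof. apply: (@small_negl _ a); [exact: subIsetr | exact: subset_card_le (@subIsetl _ _ _)]. Qed.

Lemma not_negl (S : set R) : measurable S -> lebesgue_measure S <> 0%E ->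
  ~ (@lebesgue_measure R).-negligible S.
Proof. by move=> mS S0 nS; apply: S0; exact: measure_negligible. Qed.

Lemma exists_out a : exists u : R, `[0, 1]%classic u /\ ~ A a u.
Proof.
apply: contrapT => /forallNP H.
apply: (@not_negl `[0, 1]%classic); first exact: measurable_itv.
  by rewrite lebesgue_measure_itv /= lte_fin ltr01 sube0 => /eqP; rewrite onee_eq0.
apply: negligibleS (A_negl a) => u u01; split => //.
by apply: contrapT => Au; apply: (H u).
Qed.

Lemma hit a0 (N : nat) : exists a, lt a0 a /\ Num.truncn (th a) = N.
Proof.
apply: contrapT => /forallNP H.
pose p := th a0 - N%:R.
pose Y := [set y | `[0, 1]%classic y /\ A a0 (y + N%:R)].
have Yn : (@lebesgue_measure R).-negligible Y.
  apply: (@small_negl _ a0); first by move=> y [].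
  apply: card_le_trans (card_image_le (fun z => z - N%:R) (A a0)).
  apply: subset_card_le => y [_ Ay]; exists (y + N%:R) => //; by rewrite addrK.
have pn : (@lebesgue_measure R).-negligible [set p].
  by exists [set p]; split => //; rewrite lebesgue_measure_set1.
apply: (@not_negl `[0%R, 1%R[%classic); first exact: measurable_itv.
  by rewrite lebesgue_measure_itv /= lte_fin ltr01 sube0 => /eqP; rewrite onee_eq0.
apply: negligibleS (negligibleU Yn pn) => y; rewrite /= in_itv /= => /andP[y0 y1].
pose z := y + N%:R.
have tz : Num.truncn z = N by apply: truncn_def; rewrite /z; apply/andP; split; [lra|rewrite -natr1; lra].
case: (lttri a0 (thi z)) => [lt1|[E|lt2]].
- by exfalso; apply: (H (thi z)); split => //; rewrite thiK.
- by right; rewrite /p E thiK /z addrK.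
- left; split; first by rewrite /= in_itv /= y0 ltW.
  by exists (thi z) => //; rewrite thiK.
Qed.


Definition chi a (r : R) : R := if pselect (A a r) then 0 else 1.
Definition Xf (j : R) (a : I) (u : unit_itv R) : R := Cf j (th a) * chi a (sval u).
Definition B a : set R := `[0, 1]%classic `\` A a.

Lemma ext01_val (g : R -> R) x :
  ext01 (fun u : unit_itv R => g (sval u)) x = \1_(`[0, 1]%classic) x * g x.
Proof.
rewrite /ext01; case: pselect => h; rewrite indicE.
  by rewrite mem_set ?mul1r //= in_itv.
by rewrite memNset ?mul0r //= in_itv.
Qed.

Lemma ext01_0 x : ext01 (fun _ : unit_itv R => 0) x = 0.
Proof. by rewrite /ext01; case: pselect. Qed.

Lemma B_meas a : measurable (B a : set (lebT R)).
Proof.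
have -> : B a = `[0, 1]%classic `\` (A a `&` `[0, 1]%classic).
  apply/seteqP; split => x [h1 h2]; split => //.
    by move=> [].
  by move=> ax; apply: h2.
apply: measurableD; first by apply: lebT_borel; exact: measurable_itv.
exact: (@lebT_negl R _ (A_negl a)).1.
Qed.

Lemma leb_B a : leb R (B a) = 1%E.
Proof.
have [mN N0] := @lebT_negl R _ (A_negl a).
have -> : B a = `[0, 1]%classic `\` (A a `&` `[0, 1]%classic).
  apply/seteqP; split => x [h1 h2]; split => //.
    by move=> [].
  by move=> ax; apply: h2.
rewrite measureD //.
- change (leb R `[0%R, 1%R]%classic - leb R (`[0%R, 1%R]%classic `&` (A a `&` `[0%R, 1%R]%classic)) = 1)%E.
  by rewrite setIidr ?subIsetr // N0 sube0 leb01.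
- by apply: lebT_borel; exact: measurable_itv.
- change (leb R `[0%R, 1%R]%classic < +oo)%E.
  by rewrite leb01 ltry.
Qed.

Lemma int_cst_fin (c : R) :
  (leb R).-integrable (`[0, 1]%classic : set (lebT R)) (EFin \o cst c).
Proof.
have m01 : measurable (`[0, 1]%classic : set (lebT R)) by apply: lebT_borel; exact: measurable_itv.
apply/integrableP; split; first by apply/measurable_realfun.measurable_EFinP; exact: measurable_cst.
have -> : (\int[leb R]_(x in `[0%R, 1%R]%classic) `|(EFin \o cst c) x|)%E =
  (\int[leb R]_(x in `[0%R, 1%R]%classic) cst `|c|%:E x)%E by apply: eq_integral.
rewrite (integral_cst (leb R) m01 (`|c|%:E)).
by rewrite (_ : _ `[0%R, 1%R]%classic = leb R `[0%R, 1%R]%classic) // leb01 mule1 ltry.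
Qed.

Section Poly.
Variables (n : nat) (t : 'I_n -> R) (P : {mpoly R[n]}).
Hypothesis tinj : injective t.

Definition K a := P.@[fun i => Cf (t i) (th a)].

Lemma peval_out a u : ~ A a (sval u) -> peval Xf t P a u = K a.
Proof.
move=> h; rewrite /peval /K; apply: meval_eq => i.
rewrite /Xf /chi; destruct (pselect (A a (sval u))) as [h'|h']; [by []|by rewrite mulr1].
Qed.

Lemma peval_in a u : A a (sval u) -> peval Xf t P a u = P@_0%MM.
Proof.
move=> h; rewrite /peval -meval_zero; apply: meval_eq => i.
rewrite /Xf /chi; destruct (pselect (A a (sval u))) as [h'|h']; [by rewrite mulr0|by []].
Qed.

Lemma K_bound a : `|K a| <= \sum_(m <- msupp P) `|P@_m|.
Proof. by apply: meval_bound => i; exact: Cf_norm. Qed.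

Hypothesis h0 : P@_0%MM = 0.

Lemma ext01_peval a x : ext01 (peval Xf t P a) x = K a * \1_(B a) x.
Proof.
have -> : peval Xf t P a = fun u => (fun r => K a * \1_(~` A a) r) (sval u).
  apply/funext => u; case: (pselect (A a (sval u))) => h.
    by rewrite peval_in // h0 indicE memNset ?mulr0.
  by rewrite peval_out // indicE mem_set ?mulr1.
by rewrite (ext01_val (fun r => K a * \1_(~` A a) r)) /B setDE indicI mulrCA.
Qed.

Lemma int_peval a :
  (\int[leb R]_(x in `[0%R, 1%R]%classic)
     `|ext01 (peval Xf t P a) x - ext01 (fun _ : unit_itv R => 0) x|%:E)%E = `|K a|%:E.
Proof.
have m01 : measurable (`[0, 1]%classic : set (lebT R)) by apply: lebT_borel; exact: measurable_itv.
transitivity (\int[leb R]_(x in `[0%R, 1%R]%classic) (`|K a| * \1_(B a) x)%:E)%E.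
  apply: eq_integral => x _; rewrite ext01_peval ext01_0 subr0 normrM.
  by rewrite (@ger0_norm _ (\1_(B a) x)) // indicE; case: (_ \in _).
rewrite (integralZl_indic m01 (fun _ => B a)); last exact: B_meas.
  rewrite integral_indic //; last exact: B_meas.
  rewrite setIidl; last by move=> x [].
  by change (`|K a|%:E * leb R (B a) = `|K a|%:E)%E; rewrite leb_B mule1.
by rewrite ltNge normr_ge0.
Qed.


Lemma P_neq0 : peval Xf t P <> (fun _ _ => 0) -> P != 0.
Proof.
move=> hne; apply/eqP => P0; apply: hne; apply/funext => a; apply/funext => u.
by rewrite /peval P0 meval0.
Qed.

Lemma ND_peval : peval Xf t P <> (fun _ _ => 0) -> @ND R I lt (peval Xf t P).
Proof.
move=> hne.
have m01 : measurable (`[0, 1]%classic : set (lebT R)) by apply: lebT_borel; exact: measurable_itv.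
have [k hk] := @kronecker R n P (P_neq0 hne).
have [w hw] := @realize R n t k (fun i => (msize P ^ i)%N) tinj.
set K0 := P.@[_] in hk.
have hK a : Num.truncn (th a) = pickle w -> K a = K0.
  by move=> ha; rewrite /K /K0; apply: meval_eq => i; rewrite (@Cf_code R _ _ _ ha) hw.
set M := \sum_(m <- msupp P) `|P@_m|.
split.
- move=> a.
  have -> : ext01 (peval Xf t P a) = (fun x => K a * \1_(B a) x).
    by apply/funext => x; rewrite ext01_peval.
  apply: measurable_realfun.measurable_funM; first exact: measurable_cst.
  exact: measurable_realfun.measurable_indic (B_meas a).
- exists (fun _ => M); split.
    apply: (eq_integrable m01 (EFin \o cst M)); last exact: int_cst_fin.
    move=> x; rewrite inE => x01 /=.
    by rewrite (ext01_val (fun _ => M)) indicE mem_set ?mul1r.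
  move=> a; apply: aeW => x x01.
  rewrite ext01_peval (ext01_val (fun _ => M)).
  have -> : \1_(`[0, 1]%classic) x = 1 :> R by rewrite indicE mem_set.
  rewrite mul1r normrM; apply: le_trans _ (K_bound a).
  by rewrite indicE; case: (_ \in _); rewrite ?normr1 ?normr0 ?mulr1 ?mulr0.
- exists (fun _ => 0); split.
  + apply: (eq_integrable m01 (cst 0)); last exact: integrable0.
    by move=> x _ /=; rewrite ext01_0.
  + apply: aeW => x x01 U hU; exists (thi x) => a lta.
    move: hU; rewrite ext01_0 ext01_peval => hU.
    rewrite indicE memNset ?mulr0; first exact: nbhs_singleton.
    by move=> [_]; apply; exists (thi x) => //; rewrite thiK.
  + move=> Hc.
    have K00 : (0 < `|K0|) by rewrite normr_gt0.
    have hU : nbhs (0%E : \bar R) [set y | (y < `|K0|%:E)%E].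
      apply: open_nbhs_nbhs; split; first exact: open_ereal_lt_ereal.
      by rewrite /= lte_fin.
    have [a0 Ha0] := Hc _ hU.
    have [a [la ta]] := hit a0 (pickle w).
    have := Ha0 a la; rewrite /= int_peval hK //.
    by rewrite ltxx.
Qed.

End Poly.

Lemma main_sec : @strongly_c_algebrable R I (@ND R I lt).
Proof.
exists R, Xf; split.
- exact: card_eqxx.
- move=> j j' E; apply: contrapT => jj'.
  pose t2 : 'I_2 -> R := fun i => if val i == 0%N then j else j'.
  have t2inj : injective t2.
    move=> [[|[|m1]] h1] [[|[|m2]] h2] //= E'; try (by apply: val_inj);
      rewrite /t2 /= in E'; by [exfalso; apply: jj' | exfalso; apply: jj'; rewrite E'].
  have [w hw] := @realize R 2 t2 0 (fun i => val i) t2inj.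
  have [a [_ ta]] := hit (thi 0) (pickle w).
  have [u [u01 uA]] := exists_out a.
  have u01' : (0 <= u <= 1) by move: u01; rewrite /= in_itv.
  have := congr1 (fun f => f a (exist _ u u01')) E; rewrite /= /Xf /chi /=.
  destruct (pselect (A a u)) as [h'|h']; first by []. rewrite !mulr1.
  have -> : Cf j (th a) = valk R 0 0 by rewrite (@Cf_code R _ _ _ ta); exact: (hw ord0).
  have -> : Cf j' (th a) = valk R 0 1 by rewrite (@Cf_code R _ _ _ ta); exact: (hw (Ordinal (isT : (1 < 2)%N))).
  rewrite /valk expr0 expr1 => /eqP; rewrite eq_sym invr_eq1 => /eqP.
  by move/eqP; rewrite (eqr_nat R 2 1).
- move=> n t P tinj [m Pm] E.
  have P0 : P != 0 by apply/eqP => P0; apply: Pm; rewrite P0 mcoeff0.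
  have [k hk] := @kronecker R n P P0.
  have [w hw] := @realize R n t k (fun i => (msize P ^ i)%N) tinj.
  have [a [_ ta]] := hit (thi 0) (pickle w).
  have [u [u01 uA]] := exists_out a.
  have u01' : (0 <= u <= 1) by move: u01; rewrite /= in_itv.
  have := congr1 (fun f => f a (exist _ u u01')) E; rewrite /= peval_out //.
  rewrite /K (@meval_eq _ _ _ (fun i => (k.+2%:R^-1 : R) ^+ (msize P ^ i)%N)).
    by move/eqP; rewrite (negbTE hk).
  by move=> i; rewrite (@Cf_code R _ _ _ ta) hw.
- by move=> n t P tinj h0 hne; exact: ND_peval.
Qed.

End Main.

Theorem mainTheorem13 (R : realType) (I : Type) (lt : I -> I -> Prop) :
  @continuum_index R I lt -> nonN_eq_c R ->
  @strongly_c_algebrable R I (@ND R I lt).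
Proof.
move=> [[irr trans] tri wf card small] nonN.
have /card_set_bijP [th thb] := card.
rewrite setTT_bijective in thb; case: thb => thi thK thiK.
exact: (@main_sec R I lt tri small th thi thiK nonN).
Qed.
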